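(* (i) $\mathcal{B}_{\mathbb{D}^m}$ equals the set of $X\in(\mathbb{D}^m)_{nc}$ such that the series $\sum_{l=0}^\infty\big(\sum_{w\in\mathcal{F}_m^{[l]}}f_wX^w\big)$ converges for every sequence $\{f_w\}_{w\in\mathcal{F}_m}\in\ell^2(\mathcal{F}_m)$. (ii) $\mathcal{B}_{\mathbb{B}^m}$ equals the set of $X\in(\mathbb{B}^m)_{nc}$ such that the series $\sum_{l=0}^\infty\big(\sum_{w\in\mathcal{F}_m^{[l]}}f_wX^w\big)$ converges for every sequence $\{f_w\}_{w\in\mathcal{F}_m}\in\ell^2_m(\mathcal{F}_m)$.
   Context: $\mathcal{F}_m$ is the free monoid on $\{1,\dots,m\}$, $\mathcal{F}_m^{[l]}$ the words of length $l$; for $X\in(\mathbb{C}^{N\times N})^m$, $X^w=X_{w_1}\cdots X_{w_t}$, $X^\emptyset=I_N$. For $p>0$, $\ell^2_p(\mathcal{F}_m)$ is the space of complex sequences $\{f_w\}_{w\in\mathcal{F}_m}$ with $\sum_{l\ge0}\sum_{w\in\mathcal{F}_m^{[l]}}p^{-l}|f_w|^2<\infty$, and $\ell^2(\mathcal{F}_m)=\ell^2_1(\mathcal{F}_m)$. $(\mathbb{D}^m)_{nc}=\coprod_N\{X\in(\mathbb{C}^{N\times N})^m:\|X_j\|<1\ \forall j\}$, $(\mathbb{B}^m)_{nc}=\coprod_N\{X:\sum_iX_i^\ast X_i<I_N\}$. Noncommutative functions on $\Omega$ (one of these sets) map level $N$ to $\mathbb{C}^{N\times N}$ and respect direct sums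 and similarities; $\mathcal{A}_\Omega$ consists of those locally bounded on slices separately in every matrix dimension; each $f\in\mathcal{A}_\Omega$ has Taylor--Taylor coefficients $f_w$ at $0$ with $f(X)=\sum_l\sum_{|w|=l}f_wX^w$ on $\Omega$. With $\operatorname{Tr}$ the non-normalized trace, $(\partial(\mathbb{D}^m)_{nc})_N=\mathcal{U}(N)^m$ carrying the product Haar probability $\mu_N$, and $(\partial(\mathbb{B}^m)_{nc})_N=\{X:\sum_iX_i^\ast X_i=I_N\}$ carrying the unique $\mathcal{U}(mN)$-invariant probability $\nu_N$ (action by left multiplication on $[X_1;\dots;X_m]\in\mathbb{C}^{mN\times N}$), $H^2(\Omega)$ is the set of $f\in\mathcal{A}_\Omega$ with $\sup_N\sup_{0<r<1}\int\frac1N\operatorname{Tr}(f(rX)^\ast f(rX))\,d\omega_N<\infty$. It is an inner product space with norm $\|f\|^2=\sum_{w}|f_w|^2$ for the polydisc and $\|f\|^2=\sum_wm^{-|w|}|f_w|^2$ for the ball. For $X\in\Omega\cap(\mathbb{C}^{N\times N})^m$, $E^X_\Omega:H^2(\Omega)\to\mathbb{C}^{N\times N}$ is the evaluation map $f\mapsto f(X)$. $\mathcal{B}_{\Omega,N}$ is the set of $X\in\Omega\cap(\mathbb{C}^{N\times N})^m$ for which $E^X_\Omega$ is bounded, and $\mathcal{B}_{\mathbb{D}^m}=\coprod_N\mathcal{B}_{(\mathbb{D}^m)_{nc},N}$, $\mathcal{B}_{\mathbb{B}^m}=\coprod_N\mathcal{B}_{(\mathbb{B}^m)_{nc},N}$.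 *)

(* Defs.v *)
From HB Require Import structures.
From mathcomp Require Import all_boot all_order all_algebra.
From mathcomp Require Import all_classical all_reals all_analysis.
From mathcomp.real_closed Require Import complex.
Set Implicit Arguments. Unset Strict Implicit. Unset Printing Implicit Defensive.
Import Order.TTheory GRing.Theory Num.Theory.
Import numFieldNormedType.Exports.
Local Open Scope classical_set_scope.
Local Open Scope ring_scope.
Local Open Scope complex_scope.

(* level N of (C^{N x N})^m : m-tuples of complex N x N matrices *)
Definition mxt (R : realType) (m N : nat) : Type := {ffun 'I_m -> 'M[R[i]]_N}.
HB.instance Definition _ (R : realType) (m N : nat) := Choice.on (mxt R m N).
HB.instance Definition _ (R : realType) (m N : nat) :=
  isPointed.Build (mxt R m N) 0.

Section Defs.
Variables (R : realType) (m : nat).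
Local Notation C := R[i].
Local Notation mxt N := (mxt R m N).

Definition adj p q (A : 'M[C]_(p, q)) : 'M[C]_(q, p) := (map_mx (fun z => z^*) A)^T.

Definition cnorm2 (z : C) : R := complex.Re z ^+ 2 + complex.Im z ^+ 2.
Definition frob2 p q (A : 'M[C]_(p, q)) : R := \sum_i \sum_j cnorm2 (A i j).

Definition vnorm2 N (v : 'cV[C]_N) : C := \sum_i `|v i 0| ^+ 2.

Definition mono N (X : mxt N) (w : seq 'I_m) : 'M[C]_N :=
  foldr (fun j A => X j *m A) 1%:M w.

Definition hompart N (c : seq 'I_m -> C) (X : mxt N) (l : nat) : 'M[C]_N :=
  \sum_(w : l.-tuple 'I_m) c (tval w) *: mono X (tval w).
Definition psum N (c : seq 'I_m -> C) (X : mxt N) (n : nat) : 'M[C]_N :=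
  \sum_(l < n) hompart c X l.

Definition mx_cvg_to N (S : nat -> 'M[C]_N) (L : 'M[C]_N) : Prop :=
  forall a b, ((fun n => complex.Re (S n a b)) @ \oo --> complex.Re (L a b)) /\
              ((fun n => complex.Im (S n a b)) @ \oo --> complex.Im (L a b)).

Definition wnorm_term (p : R) (c : seq 'I_m -> C) (l : nat) : R :=
  \sum_(w : l.-tuple 'I_m) p ^- l * cnorm2 (c (tval w)).
Definition l2w (p : R) (c : seq 'I_m -> C) : Prop :=
  cvg (series (wnorm_term p c) @ \oo).

Definition ncpolydisc N : set (mxt N) :=
  [set X | forall j, exists k : C, k < 1 /\
     forall v : 'cV[C]_N, vnorm2 (X j *m v) <= k * vnorm2 v].
Arguments ncpolydisc N : clear implicits.
Definition ncball N : set (mxt N) :=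
  [set X | forall v : 'cV[C]_N, v != 0 ->
     0 < (adj v *m (1%:M - \sum_j adj (X j) *m X j) *m v) 0 0].
Arguments ncball N : clear implicits.

Definition torus N : set (mxt N) := [set X | forall j, adj (X j) *m X j = 1%:M].
Arguments torus N : clear implicits.
Definition sphere N : set (mxt N) := [set X | \sum_j adj (X j) *m X j = 1%:M].
Arguments sphere N : clear implicits.

(* Borel sigma-algebra on (C^{N x N})^m : generated by real and imaginary
   parts of the entries *)
Definition gens N : set (set (mxt N)) :=
  [set A | exists j a b (B : set R), measurable B /\
     (A = (fun X : mxt N => complex.Re (X j a b)) @^-1` B \/
      A = (fun X : mxt N => complex.Im (X j a b)) @^-1` B)].
Arguments gens N : clear implicits.
Definition mesT N := g_sigma_algebraType (gens N).
Arguments mesT N : clear implicits.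

(* mu_N : product Haar probability measure on U(N)^m, characterized as the
   probability measure carried by U(N)^m invariant under left multiplication
   by U(N)^m *)
Definition is_torus_haar (mu : forall N, {measure set (mesT N) -> \bar R}) : Prop :=
  forall N, mu N setT = 1%E /\ mu N (torus N) = 1%E /\
    forall U : {ffun 'I_m -> 'M[C]_N}, (forall j, adj (U j) *m U j = 1%:M) ->
    forall A : set (mesT N), measurable A ->
      mu N ((fun X : mesT N => [ffun j => U j *m X j] : mesT N) @^-1` A) = mu N A.

(* nu_N : the U(mN)-invariant probability measure on the sphere; a unitary
   U in C^{mN x mN} is given by its m x m blocks U a b in C^{N x N}, acting on
   [X_1; ...; X_m] by left multiplication *)
Definition is_sphere_inv (nu : forall N, {measure set (mesT N) -> \bar R}) : Prop :=
  forall N, nu N setT = 1%E /\ nu N (sphere N) = 1%E /\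
    forall U : 'I_m -> 'I_m -> 'M[C]_N,
    (forall a b, \sum_k adj (U k a) *m U k b = (a == b)%:R%:M) ->
    forall A : set (mesT N), measurable A ->
      nu N ((fun X : mesT N => [ffun a => \sum_b U a b *m X b] : mesT N) @^-1` A)
        = nu N A.

Definition ncfun (Om : forall N, set (mxt N))
    (f : forall N, mxt N -> 'M[C]_N) : Prop :=
  (forall N M (X : mxt N) (Y : mxt M), Om N X -> Om M Y ->
     f (N + M)%N [ffun j => block_mx (X j) 0 0 (Y j)] =
     block_mx (f N X) 0 0 (f M Y)) /\
  (forall N (X : mxt N) (S : 'M[C]_N), S \in unitmx -> Om N X ->
     Om N [ffun j => S *m X j *m invmx S] ->
     f N [ffun j => S *m X j *m invmx S] = S *m f N X *m invmx S).

Definition locbdd_slices (Om : forall N, set (mxt N))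
    (f : forall N, mxt N -> 'M[C]_N) : Prop :=
  forall N (X Z : mxt N), Om N X -> exists e : R, 0 < e /\ exists K : R,
    forall z : C, `|z| < e%:C -> Om N (X + z *: Z) -> frob2 (f N (X + z *: Z)) <= K.

Definition inA Om f := ncfun Om f /\ locbdd_slices Om f.

Definition TTcoeff (Om : forall N, set (mxt N)) (f : forall N, mxt N -> 'M[C]_N)
    (c : seq 'I_m -> C) : Prop :=
  forall N (X : mxt N), Om N X -> mx_cvg_to (psum c X) (f N X).

Definition scal N (r : R) (X : mxt N) : mxt N := [ffun j => r%:C *: X j].

Definition inH2 (Om : forall N, set (mxt N))
    (om : forall N, {measure set (mesT N) -> \bar R})
    (f : forall N, mxt N -> 'M[C]_N) : Prop :=
  inA Om f /\ exists M : R, forall N, (0 < N)%N -> forall r : R, 0 < r < 1 ->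
    (\int[om N]_(X in setT)
        ((N%:R)^-1 * complex.Re (\tr (adj (f N (scal r X)) *m f N (scal r X))))%:E
      <= M%:E)%E.

(* E^X bounded on H^2(Om), whose norm is ||f||^2 = sum_w p^{-|w|} |f_w|^2 *)
Definition evbdd (Om : forall N, set (mxt N))
    (om : forall N, {measure set (mesT N) -> \bar R}) (p : R) N (X : mxt N) : Prop :=
  exists K : R, forall f c, inH2 Om om f -> TTcoeff Om f c ->
    forall M : R, (forall n, series (wnorm_term p c) n <= M) ->
      frob2 (f N X) <= K * M.

Definition Bset Om om p N (X : mxt N) : Prop := Om N X /\ evbdd Om om p X.

Definition cvg_set (Om : forall N, set (mxt N)) (p : R) N (X : mxt N) : Prop :=
  Om N X /\ forall c, l2w p c -> exists L, mx_cvg_to (psum c X) L.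

End Defs.

(* Main.v *)
Require Import Defs.
From HB Require Import structures.
From mathcomp Require Import all_boot all_order all_algebra.
From mathcomp Require Import all_classical all_reals all_analysis.
From mathcomp.real_closed Require Import complex.
From mathcomp Require Import ring lra.
Set Implicit Arguments. Unset Strict Implicit. Unset Printing Implicit Defensive.
Import Order.TTheory GRing.Theory Num.Theory.
Import numFieldNormedType.Exports.
Local Open Scope classical_set_scope.
Local Open Scope ring_scope.
Import HBNNSimple.
Lemma int_bound d (T : measurableType d) (R : realType) (mu : {measure set T -> \bar R})
  (f : T -> R) (B : R) : 0 <= B -> (forall x, 0 <= f x <= B) ->
  (\int[mu]_(x in setT) (f x)%:E <= B%:E * mu setT)%E.
Proof.
move=> B0 fB; rewrite ge0_integralTE; last by move=> x; rewrite lee_fin; case/andP: (fB x).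
apply: ge_ereal_sup => _ [h /= hf <-].
pose b : {nonneg R} := NngNum B0.
have := integralT_nnsfun mu (cst_nnsfun T b).
rewrite /= (integral_cst mu measurableT) => E. apply: (@le_trans _ _ (sintegral mu (cst_nnsfun T b))); last by rewrite E. 
apply: le_sintegral => x /=.
have := hf x; rewrite lee_fin => /le_trans; apply; by case/andP: (fB x).
Qed.

Section A.
Variable R : realType.
Lemma cvg_epsP (u : nat -> R) (l : R) :
  u @ \oo --> l <-> forall e, 0 < e -> exists N, forall n, (N <= n)%N -> `|l - u n| < e.
Proof.
rewrite cvgrPdist_lt; split=> H e e0.
  by have [N _ HN] := H e e0; exists N => n Nn; apply: HN.
by have [N HN] := H e e0; exists N => // n Nn; apply: HN.
Qed.

Lemma cauchy_epsP (u : nat -> R) :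
  (forall e, 0 < e -> exists N, forall a b, (N <= a)%N -> (N <= b)%N -> `|u a - u b| < e) ->
  exists l : R, u @ \oo --> l.
Proof.
move=> H; have : cvgn u.
  apply: cauchy_cvg; apply/cauchy_ballP => e e0.
  have [N HN] := H e e0; rewrite near_map2.
  exists ([set n | (N <= n)%N], [set n | (N <= n)%N]).
    by split; exists N.
  by case=> a b [/= Na Nb]; rewrite /ball /= HN.
by move=> c; exists (limn u).
Qed.
Lemma entry_cauchy (s S : nat -> R) (l K : R) : 0 <= K -> S @ \oo --> l ->
  (forall a b, (a <= b)%N -> (s b - s a) ^+ 2 <= K * (S b - S a)) ->
  exists l' : R, s @ \oo --> l'.
Proof.
move=> K0 /cvg_epsP HS Hs; apply: cauchy_epsP => e e0.
have e20 : 0 < e ^+ 2 / (2 * (K + 1)) by rewrite divr_gt0 ?exprn_gt0 // mulr_gt0 // ltr_wpDl.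
have [N HN] := HS _ e20; exists N => a b Na Nb.
have key : forall a b, (N <= a)%N -> (N <= b)%N -> (a <= b)%N -> `|s a - s b| < e.
  move=> x y Nx Ny xy; rewrite distrC -(@ltr_pXn2r _ 2) ?nnegrE ?normr_ge0 ?ltW //.
  rewrite real_normK ?num_real //; apply: (le_lt_trans (Hs _ _ xy)).
  have h1 := HN _ Nx; have h2 := HN _ Ny.
  have : S y - S x <= `|l - S x| + `|l - S y|.
    have h3 := ler_norm (l - S x); have h4 := ler_norm (S y - l).
    rewrite distrC in h4; lra.
  move=> hd; apply: (le_lt_trans (ler_wpM2l K0 hd)).
  have hlt : `|l - S x| + `|l - S y| < 2 * (e ^+ 2 / (2 * (K + 1))) by lra.
  apply: (le_lt_trans (ler_wpM2l K0 (ltW hlt))).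
  have K1 : K + 1 != 0 by rewrite gt_eqF // ltr_wpDl.
  have -> : K * (2 * (e ^+ 2 / (2 * (K + 1)))) = e ^+ 2 * (K / (K + 1)) by field.
  rewrite gtr_pMr ?exprn_gt0 // ltr_pdivrMr ?ltr_wpDl // mul1r; lra.
case: (leqP a b) => ab; first exact: key.
by rewrite distrC; apply: key => //; exact: ltnW.
Qed.
End A.

Section A2.
Variable R : realType.
Lemma discr_CS (A S B : R) : 0 <= A -> (forall t, 0 <= t ^+ 2 * A - 2 * t * S + B) -> S ^+ 2 <= A * B.
Proof.
move=> A0 H; have B0 : 0 <= B by have := H 0; have -> : 0 ^+ 2 * A - 2 * 0 * S + B = B by ring.
have [A0'|Apos] := eqVneq A 0.
  rewrite A0' mul0r; have [S0|S0] := eqVneq S 0; first by rewrite S0 expr0n.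
  have := H ((B + 1) / (2 * S)); rewrite A0' mulr0 add0r.
  have -> : 2 * ((B + 1) / (2 * S)) * S = B + 1 by field.
  lra.
have Ap : 0 < A by rewrite lt_def Apos A0.
have := H (S / A).
have -> : (S / A) ^+ 2 * A - 2 * (S / A) * S + B = B - S ^+ 2 / A by field.
rewrite subr_ge0 ler_pdivrMr // mulrC => //.
Qed.

Lemma lin3 I (s : seq I) (f g h : I -> R) (al be : R) :
  \sum_(i <- s) (al * f i - be * g i + h i) = al * \sum_(i <- s) f i - be * \sum_(i <- s) g i + \sum_(i <- s) h i.
Proof.
elim: s => [|x s IH]; first by rewrite !big_nil !mulr0 subr0 addr0.
rewrite !big_cons IH; ring.
Qed.

Definition Qd (T : nat -> R) (n : nat) : R := 1 + \sum_(0 <= l < n) T l.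

Lemma QdS T n : Qd T n.+1 = Qd T n + T n.
Proof. by rewrite /Qd big_nat_recr //= addrA. Qed.

Lemma Qd_ge1 T n : (forall l, 0 <= T l) -> 1 <= Qd T n.
Proof. by move=> T0; rewrite /Qd lerDl sumr_ge0. Qed.

Lemma Qd_mono T n k : (forall l, 0 <= T l) -> (n <= k)%N -> Qd T n <= Qd T k.
Proof.
move=> T0 nk; rewrite /Qd lerD2l [X in _ <= X](@big_cat_nat _ _ _ n) //= lerDl sumr_ge0 // => l _.
Qed.

Lemma abel_dini1 T n : (forall l, 0 <= T l) ->
  \sum_(0 <= l < n) T l / Qd T l.+1 ^+ 2 <= 1.
Proof.
move=> T0.
have H : forall l, T l / Qd T l.+1 ^+ 2 <= (- (Qd T l.+1)^-1) - (- (Qd T l)^-1).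
  move=> l; rewrite QdS; have q1 := Qd_ge1 l T0; have t0 := T0 l.
  have -> : - (Qd T l + T l)^-1 - - (Qd T l)^-1 = T l / (Qd T l * (Qd T l + T l)).
    by field; apply/andP; split; rewrite gt_eqF //; lra.
  apply: ler_wpM2l => //; rewrite lef_pV2 ?posrE; try (apply: mulr_gt0; lra).
    by rewrite expr2 ler_pM2r; lra.
apply: (le_trans (ler_sum _ (fun l _ => H l))).
rewrite (telescope_sumr (fun k => - (Qd T k)^-1)) //= {2}/Qd big_geq // addr0 invr1.
have : 0 <= (Qd T n)^-1 by rewrite invr_ge0; have := Qd_ge1 n T0; lra.
lra.
Qed.
Lemma sum_nat_mono' (g : nat -> R) n k : (forall l, 0 <= g l) -> (n <= k)%N ->
  \sum_(0 <= l < n) g l <= \sum_(0 <= l < k) g l.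
Proof. by move=> g0 nk; rewrite [X in _ <= X](@big_cat_nat _ _ _ n) //= lerDl sumr_ge0. Qed.

Lemma cvg_epsP' (u : nat -> R) (l : R) :
  u @ \oo --> l -> forall e, 0 < e -> exists N, forall n, (N <= n)%N -> `|l - u n| < e.
Proof.
rewrite cvgrPdist_lt => H e e0.
by have [N _ HN] := H e e0; exists N => n Nn; apply: HN.
Qed.

Lemma abel_dini2 (T : nat -> R) (L : R) : (forall l, 0 <= T l) ->
  (fun n => \sum_(0 <= l < n) T l / Qd T l.+1) @ \oo --> L ->
  exists B, forall n, \sum_(0 <= l < n) T l <= B.
Proof.
move=> T0 HU; case: (pselect (exists B, forall n, \sum_(0 <= l < n) T l <= B)) => // nB.
exfalso.
have unb : forall B, exists n, B < \sum_(0 <= l < n) T l.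
  move=> B; have : ~ (forall n, \sum_(0 <= l < n) T l <= B) by move=> h; apply: nB; exists B.
  by move=> /existsNP [n /negP]; rewrite -ltNge => Hn; exists n.
set U := fun n => \sum_(0 <= l < n) T l / Qd T l.+1.
have U0 : forall l, 0 <= T l / Qd T l.+1.
  by move=> l; rewrite divr_ge0 //; have := Qd_ge1 l.+1 T0; lra.
have Umono : {homo U : a b / (a <= b)%N >-> a <= b} by move=> a b ab; exact: sum_nat_mono'.
have UL : forall n, U n <= L.
  move=> n; have := nondecreasing_cvgn_le Umono (cvgP _ HU) n.
  by rewrite (cvg_lim _ HU).
have h2 : (0:R) < 1 / 2 by rewrite divr_gt0.
have [n0 Hn0] := cvg_epsP' HU h2.
have [n1 Hn1] := unb (2 * Qd T n0).
have q0 := Qd_ge1 n0 T0.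
have Q1 : 2 * Qd T n0 < Qd T n1 by rewrite /Qd; rewrite /Qd in Hn1 q0; lra.
have n01 : (n0 <= n1)%N.
  rewrite leqNgt; apply/negP => /ltnW h; have := Qd_mono T0 h; lra.
have e1 : U n1 = U n0 + \sum_(n0 <= l < n1) T l / Qd T l.+1 by rewrite /U [in LHS](@big_cat_nat _ _ _ n0).
have e2 : \sum_(n0 <= l < n1) T l = Qd T n1 - Qd T n0.
  by rewrite /Qd [X in _ = 1 + X - _](@big_cat_nat _ _ _ n0) //=; ring.
have q1 : 0 < Qd T n1 by lra.
have e3 : (Qd T n1 - Qd T n0) / Qd T n1 <= \sum_(n0 <= l < n1) T l / Qd T l.+1.
  rewrite -e2 mulr_suml; apply: ler_sum_nat => l /andP [_ ln1].
  apply: ler_wpM2l => //; rewrite lef_pV2 ?posrE //; last by have := Qd_ge1 l.+1 T0; lra.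
  exact: Qd_mono.
have e4 : 1 / 2 <= (Qd T n1 - Qd T n0) / Qd T n1.
  rewrite ler_pdivlMr //; lra.
move: (UL n1) (Hn0 _ (leqnn n0)) e1 e3 e4; rewrite /U /= ltr_norml => a1 /andP [_ a2] a3 a4 a5; lra.
Qed.
End A2.

Local Open Scope complex_scope.
Section S.
Variables (R : realType) (m : nat).
Local Notation C := R[i].

Lemma cnorm2_ge0 (z : C) : 0 <= cnorm2 z.
Proof. by rewrite /cnorm2 addr_ge0 // sqr_ge0. Qed.

Lemma cnorm2D (x y : C) : cnorm2 (x + y) <= 2 * (cnorm2 x + cnorm2 y).
Proof. case: x => a b; case: y => c d; rewrite /cnorm2 /=; have := sqr_ge0 (a - c); have := sqr_ge0 (b - d); nra. Qed.

Lemma cnorm2M (x y : C) : cnorm2 (x * y) = cnorm2 x * cnorm2 y.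
Proof. case: x => a b; case: y => c d; rewrite /cnorm2 /=; ring. Qed.

Lemma conjM_cnorm2 (x : C) : x^* * x = (cnorm2 x)%:C.
Proof. case: x => a b; rewrite /cnorm2 /=; apply/eqP; rewrite eq_complex /=; apply/andP; split; apply/eqP; ring. Qed.

Lemma normc2 (x : C) : `|x| ^+ 2 = (cnorm2 x)%:C.
Proof. by rewrite normc_def -rmorphXn sqr_sqrtr // cnorm2_ge0. Qed.

Lemma cnorm2_real (r : R) : cnorm2 r%:C = r ^+ 2.
Proof. by rewrite /cnorm2 /= expr0n addr0. Qed.

Lemma cnorm2_conj (x : C) : cnorm2 (x^*) = cnorm2 x.
Proof. case: x => a b; rewrite /cnorm2 /=; ring. Qed.

Lemma Re_sq_le (x : C) : complex.Re x ^+ 2 <= cnorm2 x.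
Proof. by rewrite /cnorm2 lerDl sqr_ge0. Qed.
Lemma Im_sq_le (x : C) : complex.Im x ^+ 2 <= cnorm2 x.
Proof. by rewrite /cnorm2 lerDr sqr_ge0. Qed.

Lemma frob2_ge0 p q (A : 'M[C]_(p, q)) : 0 <= frob2 A.
Proof. by rewrite /frob2 sumr_ge0 // => i _; rewrite sumr_ge0 // => j _; exact: cnorm2_ge0. Qed.

Lemma frob2D p q (A B : 'M[C]_(p, q)) : frob2 (A + B) <= 2 * (frob2 A + frob2 B).
Proof.
rewrite /frob2 -big_split mulr_sumr /=; apply: ler_sum => i _.
rewrite -big_split mulr_sumr /=; apply: ler_sum => j _; rewrite mxE; exact: cnorm2D.
Qed.

Lemma frob2Z p q (c : C) (A : 'M[C]_(p, q)) : frob2 (c *: A) = cnorm2 c * frob2 A.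
Proof.
rewrite /frob2 mulr_sumr; apply: eq_bigr => i _; rewrite mulr_sumr; apply: eq_bigr => j _.
by rewrite mxE cnorm2M.
Qed.

Lemma frob2_sum_seq p q I (s : seq I) (F : I -> 'M[C]_(p, q)) :
  frob2 (\sum_(i <- s) F i) <= 2 ^+ size s * \sum_(i <- s) frob2 (F i).
Proof.
elim: s => [|x s IH]; first by rewrite !big_nil /frob2 big1 // => i _; rewrite big1 // => j _; rewrite mxE /cnorm2 /= expr0n addr0.
rewrite !big_cons /=; apply: (le_trans (frob2D _ _)).
rewrite exprS -mulrA ler_pM2l // mulrDr lerD //.
  by rewrite ler_peMl ?frob2_ge0 // exprn_ege1 // ler1n.
Qed.
Definition vn N (v : 'cV[C]_N) : R := \sum_i cnorm2 (v i 0).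

Lemma vnorm2E N (v : 'cV[C]_N) : vnorm2 v = (vn v)%:C.
Proof. by rewrite /vnorm2 /vn rmorph_sum; apply: eq_bigr => i _; rewrite normc2. Qed.

Lemma vn_ge0 N (v : 'cV[C]_N) : 0 <= vn v.
Proof. by rewrite /vn sumr_ge0 // => i _; exact: cnorm2_ge0. Qed.

Lemma frob2_cols p q (A : 'M[C]_(p, q)) : frob2 A = \sum_j vn (col j A).
Proof. by rewrite /frob2 exchange_big; apply: eq_bigr => j _; apply: eq_bigr => i _; rewrite mxE. Qed.

Lemma col_mulmx p q r (Y : 'M[C]_(p, q)) (A : 'M[C]_(q, r)) j : col j (Y *m A) = Y *m col j A.
Proof. by apply/matrixP => i k; rewrite !mxE; apply: eq_bigr => l _; rewrite !mxE. Qed.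

Definition contr N (Y : 'M[C]_N) := forall v : 'cV[C]_N, vnorm2 (Y *m v) <= vnorm2 v.

Lemma frob2_contr N q (Y : 'M[C]_N) (A : 'M[C]_(N, q)) : contr Y -> frob2 (Y *m A) <= frob2 A.
Proof.
move=> HY; rewrite !frob2_cols; apply: ler_sum => j _; rewrite col_mulmx.
by have := HY (col j A); rewrite !vnorm2E lecR.
Qed.

Lemma frob2_1 N : frob2 (1%:M : 'M[C]_N) = N%:R.
Proof.
have -> : (N%:R : R) = \sum_(i < N) 1 by rewrite sumr_const card_ord.
rewrite /frob2; apply: eq_bigr => i _.
rewrite (bigD1 i) //= big1 ?addr0; first by rewrite mxE eqxx cnorm2_real expr1n.
by move=> j /negbTE ji; rewrite mxE eq_sym ji cnorm2_real expr0n.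
Qed.

Lemma Re_tr_adj N (A : 'M[C]_N) : complex.Re (\tr (adj A *m A)) = frob2 A.
Proof.
rewrite /frob2 exchange_big /mxtrace.
have -> : \sum_i (adj A *m A) i i = (\sum_i \sum_j cnorm2 (A j i))%:C.
  rewrite rmorph_sum; apply: eq_bigr => i _; rewrite mxE rmorph_sum; apply: eq_bigr => j _.
  by rewrite /adj !mxE conjM_cnorm2.
by [].
Qed.

Lemma adjM p q r (A : 'M[C]_(p, q)) (B : 'M[C]_(q, r)) : adj (A *m B) = adj B *m adj A.
Proof. by rewrite /adj -trmx_mul; congr (_^T); apply/matrixP => i j; rewrite !mxE rmorph_sum; apply: eq_bigr => k _; rewrite !mxE rmorphM. Qed.

Lemma adj_vnorm2 N (v : 'cV[C]_N) : (adj v *m v) 0 0 = vnorm2 v.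
Proof.
rewrite vnorm2E mxE /vn rmorph_sum; apply: eq_bigr => i _.
by rewrite /adj !mxE conjM_cnorm2.
Qed.
Local Notation mxt N := (mxt R m N).
Definition BND N (Y : mxt N) := forall j, contr (Y j).

Lemma frob2_mono N (Y : mxt N) w : BND Y -> frob2 (mono Y w) <= N%:R.
Proof.
move=> HY; elim: w => [|j w IH] /=; first by rewrite frob2_1.
exact: le_trans (frob2_contr _ (HY j)) IH.
Qed.

Lemma polydisc_BND N (X : mxt N) : @ncpolydisc R m N X -> BND X.
Proof.
move=> HX j v; have [k [k1 Hk]] := HX j; apply: (le_trans (Hk v)).
rewrite ler_piMl //; first by rewrite vnorm2E ler0c vn_ge0.
exact: ltW.
Qed.

Lemma vn_col_mx p q (a : 'cV[C]_p) (b : 'cV[C]_q) : vn (col_mx a b) = vn a + vn b.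
Proof. by rewrite /vn big_split_ord /=; congr (_ + _); apply: eq_bigr => i _; rewrite ?col_mxEu ?col_mxEd. Qed.

Lemma BND_block N M (X : mxt N) (Y : mxt M) : BND X -> BND Y ->
  BND ([ffun j => block_mx (X j) 0 0 (Y j)] : mxt (N + M)).
Proof.
move=> HX HY j v; rewrite ffunE -(vsubmxK v) mul_block_col !mul0mx addr0 add0r.
have := HX j (usubmx v); have := HY j (dsubmx v).
rewrite !vnorm2E !lecR !vn_col_mx => h1 h2; exact: lerD.
Qed.

Lemma ball_BND N (X : mxt N) : @ncball R m N X -> BND X.
Proof.
move=> HX j v; have [->|v0] := eqVneq v 0; first by rewrite mulmx0.
have := HX v v0.
have -> : adj v *m (1%:M - \sum_j adj (X j) *m X j) *m v =
          adj v *m v - \sum_j adj (X j *m v) *m (X j *m v).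
  rewrite mulmxBr mulmx1 mulmxBl; congr (_ - _).
  rewrite mulmx_sumr mulmx_suml; apply: eq_bigr => i _.
  by rewrite adjM !mulmxA.
have E (A B : 'M[C]_1) : (A - B) 0 0 = A 0 0 - B 0 0 by rewrite !mxE.
rewrite E summxE adj_vnorm2.
under eq_bigr do rewrite adj_vnorm2.
under eq_bigr do rewrite vnorm2E.
rewrite !vnorm2E -rmorph_sum -rmorphB ltcR subr_gt0 lecR => H.
apply: le_trans (ltW H); rewrite (bigD1 j) //= lerDl sumr_ge0 // => i _; exact: vn_ge0.
Qed.
Lemma frob2_sum_fin p q (I : finType) (F : I -> 'M[C]_(p, q)) :
  frob2 (\sum_(i : I) F i) <= 2 ^+ #|I| * \sum_(i : I) frob2 (F i).
Proof. by rewrite -!big_enum /= cardE; exact: frob2_sum_seq. Qed.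

Definition Bd (c : seq 'I_m -> C) (n : nat) : R :=
  \sum_(l < n) 2 ^+ n * (2 ^+ #|{: l.-tuple 'I_m}| * \sum_(w : l.-tuple 'I_m) cnorm2 (c w)).

Lemma Bd_ge0 c n : 0 <= Bd c n.
Proof.
rewrite /Bd sumr_ge0 // => l _; rewrite !mulr_ge0 ?exprn_ge0 // sumr_ge0 // => w _; exact: cnorm2_ge0.
Qed.

Lemma frob2_psum N (Y : mxt N) c n : BND Y -> frob2 (psum c Y n) <= Bd c n * N%:R.
Proof.
move=> HY; rewrite /psum /Bd; apply: (le_trans (frob2_sum_fin _)); rewrite card_ord.
rewrite mulr_sumr mulr_suml; apply: ler_sum => l _; rewrite -mulrA ler_pM2l ?exprn_gt0 //.
rewrite /hompart; apply: (le_trans (frob2_sum_fin _)); rewrite -mulrA ler_pM2l ?exprn_gt0 //.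
rewrite mulr_suml; apply: ler_sum => w _; rewrite frob2Z ler_wpM2l ?cnorm2_ge0 //.
exact: frob2_mono.
Qed.
Definition cut (a b : nat) (c : seq 'I_m -> C) (w : seq 'I_m) : C :=
  if (a <= size w < b)%N then c w else 0.

Lemma hompart_cut N (Y : mxt N) a b c l :
  hompart (cut a b c) Y l = if (a <= l < b)%N then hompart c Y l else 0.
Proof.
rewrite /hompart /cut; case: ifP => H.
  by apply: eq_bigr => w _; rewrite size_tuple H.
by rewrite big1 // => w _; rewrite size_tuple H scale0r.
Qed.

Lemma psum_nat N (Y : mxt N) c n : psum c Y n = \sum_(0 <= l < n) hompart c Y l.
Proof. by rewrite /psum big_mkord. Qed.

Lemma psum_cut_ge N (Y : mxt N) a b c n : (b <= n)%N ->
  psum (cut a b c) Y n = psum (cut a b c) Y b.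
Proof.
move=> bn; rewrite !psum_nat (@big_cat_nat _ _ _ b) //= [X in _ + X]big1_seq ?addr0 //.
move=> l /andP [_]; rewrite mem_index_iota => /andP [bl _]; rewrite hompart_cut.
by rewrite ifF //; apply/negbTE; rewrite negb_and -leqNgt bl orbT.
Qed.

Lemma psum_cut_diff N (Y : mxt N) a b c : (a <= b)%N ->
  psum (cut a b c) Y b = psum c Y b - psum c Y a.
Proof.
move=> ab; rewrite !psum_nat [in RHS](@big_cat_nat _ _ _ a) //= addrAC subrr add0r.
rewrite [in LHS](@big_cat_nat _ _ _ a) //= big1_seq ?add0r.
  apply: eq_big_seq => l; rewrite mem_index_iota => H; by rewrite hompart_cut H.
move=> l /andP [_]; rewrite mem_index_iota => /andP [_ la]; rewrite hompart_cut.
by rewrite ifF //; apply/negbTE; rewrite negb_and -ltnNge la.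
Qed.

Lemma sum_block I (s : seq I) p q (F : I -> 'M[C]_p) (G : I -> 'M[C]_q) :
  \sum_(i <- s) block_mx (F i) 0 0 (G i) = block_mx (\sum_(i <- s) F i) 0 0 (\sum_(i <- s) G i).
Proof.
elim: s => [|x s IH]; first by rewrite !big_nil block_mx0.
by rewrite !big_cons IH add_block_mx !addr0.
Qed.

Lemma mono_block N M (X : mxt N) (Y : mxt M) w :
  mono ([ffun j => block_mx (X j) 0 0 (Y j)] : mxt (N + M)) w = block_mx (mono X w) 0 0 (mono Y w).
Proof.
elim: w => [|j w IH] /=; first by rewrite -scalar_mx_block.
by rewrite IH ffunE mulmx_block !mulmx0 !mul0mx !addr0 !add0r.
Qed.

Lemma psum_block N M (X : mxt N) (Y : mxt M) c n :
  psum c ([ffun j => block_mx (X j) 0 0 (Y j)] : mxt (N + M)) n = block_mx (psum c X n) 0 0 (psum c Y n).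
Proof.
rewrite /psum -sum_block; apply: eq_bigr => l _; rewrite /hompart -sum_block.
by apply: eq_bigr => w _; rewrite mono_block scale_block_mx !scaler0.
Qed.

Lemma mono_sim N (X : mxt N) (S : 'M[C]_N) w : S \in unitmx ->
  mono ([ffun j => S *m X j *m invmx S] : mxt N) w = S *m mono X w *m invmx S.
Proof.
move=> SU; elim: w => [|j w IH] /=; first by rewrite mulmx1 mulmxV.
by rewrite IH ffunE !mulmxA mulmxKV.
Qed.

Lemma psum_sim N (X : mxt N) (S : 'M[C]_N) c n : S \in unitmx ->
  psum c ([ffun j => S *m X j *m invmx S] : mxt N) n = S *m psum c X n *m invmx S.
Proof.
move=> SU; rewrite /psum mulmx_sumr mulmx_suml; apply: eq_bigr => l _.
rewrite /hompart mulmx_sumr mulmx_suml; apply: eq_bigr => w _.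
by rewrite mono_sim // -scalemxAr -scalemxAl.
Qed.
Definition fpoly a b c : forall N, mxt N -> 'M[C]_N :=
  fun N Y => if `[< BND Y >] then psum (cut a b c) Y b else 0.

Lemma frob2_fpoly a b c N (Y : mxt N) : frob2 (fpoly a b c Y) <= Bd (cut a b c) b * N%:R.
Proof.
rewrite /fpoly; case: asboolP => H; first exact: frob2_psum.
rewrite /frob2 big1 ?mulr_ge0 ?Bd_ge0 // => i _; rewrite big1 // => j _.
by rewrite mxE /cnorm2 /= expr0n addr0.
Qed.

Lemma fpoly_TT (Om : forall N, set (mxt N)) a b c :
  (forall N (X : mxt N), Om N X -> BND X) -> TTcoeff Om (fpoly a b c) (cut a b c).
Proof.
move=> OB N X HX i j; rewrite /fpoly asboolT; last exact: OB.
split; apply: cvg_near_cst; exists b => // n /= bn; by rewrite psum_cut_ge.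
Qed.

Lemma fpoly_ncfun (Om : forall N, set (mxt N)) a b c :
  (forall N (X : mxt N), Om N X -> BND X) -> ncfun Om (fpoly a b c).
Proof.
move=> OB; split.
  move=> N M X Y HX HY; rewrite /fpoly !asboolT ?psum_block //; try exact: OB.
  by apply: BND_block; exact: OB.
move=> N X S SU HX HSX; rewrite /fpoly !asboolT ?psum_sim //; exact: OB.
Qed.
Lemma fpoly_inH2 (Om : forall N, set (mxt N)) (om : forall N, {measure set (mesT R m N) -> \bar R}) a b c :
  (forall N (X : mxt N), Om N X -> BND X) -> (forall N, om N setT = 1%E) ->
  inH2 Om om (fpoly a b c).
Proof.
move=> OB om1; split.
  split; first exact: fpoly_ncfun.
  move=> N X Z HX; exists 1; split => //; exists (Bd (cut a b c) b * N%:R) => z _ _.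
  exact: frob2_fpoly.
exists (Bd (cut a b c) b) => N N0 r _.
apply: le_trans (int_bound _ (Bd_ge0 _ _) _) _; last by rewrite om1 mule1.
move=> X; rewrite Re_tr_adj; apply/andP; split.
  by rewrite mulr_ge0 ?frob2_ge0 // invr_ge0.
rewrite ler_pdivrMl ?ltr0n // mulrC; exact: frob2_fpoly.
Qed.
Lemma wnorm_ge0 (p : R) (c : seq 'I_m -> C) l : 0 < p -> 0 <= wnorm_term p c l.
Proof.
move=> p0; rewrite /wnorm_term sumr_ge0 // => w _.
by rewrite mulr_ge0 ?cnorm2_ge0 // invr_ge0 exprn_ge0 // ltW.
Qed.

Lemma wnorm_cut (p : R) a b (c : seq 'I_m -> C) l :
  wnorm_term p (cut a b c) l = if (a <= l < b)%N then wnorm_term p c l else 0.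
Proof.
rewrite /wnorm_term /cut; case: ifP => H.
  by apply: eq_bigr => w _; rewrite size_tuple H.
by rewrite big1 // => w _; rewrite size_tuple H /cnorm2 /= expr0n addr0 mulr0.
Qed.

Lemma sum_nat_mono (g : nat -> R) n k : (forall l, 0 <= g l) -> (n <= k)%N ->
  \sum_(0 <= l < n) g l <= \sum_(0 <= l < k) g l.
Proof.
by move=> g0 nk; rewrite [X in _ <= X](@big_cat_nat _ _ _ n) //= lerDl sumr_ge0.
Qed.

Lemma series_cut_le (p : R) a b (c : seq 'I_m -> C) n : 0 < p -> (a <= b)%N ->
  series (wnorm_term p (cut a b c)) n <= \sum_(a <= l < b) wnorm_term p c l.
Proof.
move=> p0 ab; rewrite /series /=.
apply: (le_trans (sum_nat_mono _ (leq_addr b n))).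
  by move=> l; rewrite wnorm_cut; case: ifP => _ //; exact: wnorm_ge0.
rewrite [X in X <= _](@big_cat_nat _ _ _ a) //= ?(leq_trans ab) ?leq_addl //.
rewrite [X in _ + X <= _](@big_cat_nat _ _ _ b) //= ?leq_addl //.
rewrite [X in X + _ <= _]big1_seq ?add0r; last first.
  move=> l /andP [_]; rewrite mem_index_iota => /andP [_ la]; rewrite wnorm_cut ifF //.
  by apply/negbTE; rewrite negb_and -ltnNge la.
rewrite [X in _ + X <= _]big1_seq ?addr0; last first.
  move=> l /andP [_]; rewrite mem_index_iota => /andP [bl _]; rewrite wnorm_cut ifF //.
  by apply/negbTE; rewrite negb_and -leqNgt bl orbT.
rewrite le_eqVlt; apply/orP; left; apply/eqP; apply: eq_big_seq => l.
by rewrite mem_index_iota => H; rewrite wnorm_cut H.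
Qed.

Lemma ReB (x y : C) : complex.Re (x - y) = complex.Re x - complex.Re y.
Proof. by case: x => a b; case: y => c d. Qed.
Lemma ImB (x y : C) : complex.Im (x - y) = complex.Im x - complex.Im y.
Proof. by case: x => a b; case: y => c d. Qed.

Lemma cnorm2_le_frob2 p q (A : 'M[C]_(p, q)) i j : cnorm2 (A i j) <= frob2 A.
Proof.
rewrite /frob2 (bigD1 i) //= (bigD1 j) //= -addrA lerDl addr_ge0 ?sumr_ge0 // => k _.
  exact: cnorm2_ge0.
by rewrite sumr_ge0 // => l _; exact: cnorm2_ge0.
Qed.

Lemma B_to_cvg (Om : forall N, set (mxt N)) (om : forall N, {measure set (mesT R m N) -> \bar R})
   p N (X : mxt N) : 0 < p -> (forall N (X : mxt N), Om N X -> BND X) -> (forall N, om N setT = 1%E) ->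
  Bset Om om p X -> cvg_set Om p X.
Proof.
move=> p0 OB om1 [HX [K HK]]; split => // c Hc.
set u := wnorm_term p c.
have key : forall a b, (a <= b)%N -> frob2 (psum c X b - psum c X a) <= `|K| * (series u b - series u a).
  move=> a b ab.
  have := HK _ _ (fpoly_inH2 a b c OB om1) (fpoly_TT a b c OB) (\sum_(a <= l < b) u l) (fun n => series_cut_le c n p0 ab).
  rewrite /fpoly asboolT ?psum_cut_diff //; last exact: OB.
  move=> H; apply: (le_trans H); rewrite sub_series ab ler_wpM2r ?ler_norm //.
  by rewrite sumr_ge0 // => l _; exact: wnorm_ge0.
have E : forall (F : C -> R), (forall x y, F x - F y = F (x - y)) ->
    (forall x, F x ^+ 2 <= cnorm2 x) -> forall i j,
    exists l : R, (fun n => F (psum c X n i j)) @ \oo --> l.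
  move=> F FB HF i j; apply: (entry_cauchy (normr_ge0 K) Hc) => a b ab.
  rewrite FB; have -> : psum c X b i j - psum c X a i j = (psum c X b - psum c X a) i j by rewrite !mxE.
  exact: le_trans (HF _) (le_trans (cnorm2_le_frob2 _ i j) (key a b ab)).
have ER := E _ (fun x y => esym (ReB x y)) Re_sq_le.
have EI := E _ (fun x y => esym (ImB x y)) Im_sq_le.
exists (\matrix_(i, j) (limn (fun n => complex.Re (psum c X n i j)) +i* limn (fun n => complex.Im (psum c X n i j)))).
move=> i j; rewrite mxE /=; split.
  by have [l Hl] := ER i j; apply: cvgP Hl.
by have [l Hl] := EI i j; apply: cvgP Hl.
Qed.
Lemma ReD (x y : C) : complex.Re (x + y) = complex.Re x + complex.Re y.
Proof. by case: x => a b; case: y => c d. Qed.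
Lemma ImD (x y : C) : complex.Im (x + y) = complex.Im x + complex.Im y.
Proof. by case: x => a b; case: y => c d. Qed.
Lemma Re_sum I (s : seq I) (F : I -> C) : complex.Re (\sum_(i <- s) F i) = \sum_(i <- s) complex.Re (F i).
Proof. by elim: s => [|x s IH]; rewrite ?big_nil // !big_cons ReD IH. Qed.
Lemma Im_sum I (s : seq I) (F : I -> C) : complex.Im (\sum_(i <- s) F i) = \sum_(i <- s) complex.Im (F i).
Proof. by elim: s => [|x s IH]; rewrite ?big_nil // !big_cons ImD IH. Qed.

Lemma cs_nested n (x y : forall l : 'I_n, l.-tuple 'I_m -> C) (q : nat -> R) : (forall l, 0 < q l) ->
  cnorm2 (\sum_(l < n) \sum_(w : l.-tuple 'I_m) x l w * y l w) <=
  2 * ((\sum_(l < n) \sum_(w : l.-tuple 'I_m) (q l)^-1 * cnorm2 (x l w)) *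
       (\sum_(l < n) \sum_(w : l.-tuple 'I_m) q l * cnorm2 (y l w))).
Proof.
move=> q0.
set A := \sum_(l < n) \sum_(w : l.-tuple 'I_m) (q l)^-1 * cnorm2 (x l w); set B := \sum_(l < n) \sum_(w : l.-tuple 'I_m) q l * cnorm2 (y l w).
have A0 : 0 <= A.
  rewrite /A sumr_ge0 // => l _; rewrite sumr_ge0 // => w _.
  by rewrite mulr_ge0 ?cnorm2_ge0 // invr_ge0 ltW.
have HR : complex.Re (\sum_(l < n) \sum_(w : l.-tuple 'I_m) x l w * y l w) ^+ 2 <= A * B.
  apply: discr_CS => // t.
  have : 0 <= \sum_(l < n) \sum_(w : l.-tuple 'I_m) (q l)^-1 *
      ((t * complex.Re (x l w) - q l * complex.Re (y l w)) ^+ 2 +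
       (t * complex.Im (x l w) + q l * complex.Im (y l w)) ^+ 2).
    rewrite sumr_ge0 // => l _; rewrite sumr_ge0 // => w _.
    by rewrite mulr_ge0 ?addr_ge0 ?sqr_ge0 // invr_ge0 ltW.
  have E : forall (l : 'I_n) (w : l.-tuple 'I_m), (q l)^-1 *
      ((t * complex.Re (x l w) - q l * complex.Re (y l w)) ^+ 2 +
       (t * complex.Im (x l w) + q l * complex.Im (y l w)) ^+ 2) =
      t ^+ 2 * ((q l)^-1 * cnorm2 (x l w)) - 2 * t * complex.Re (x l w * y l w) + q l * cnorm2 (y l w).
    move=> l w; have ql := q0 l; case: (x l w) => a b; case: (y l w) => c d; rewrite /cnorm2 /=.
    by field; rewrite gt_eqF.
  under eq_bigr => l _ do under eq_bigr => w _ do rewrite E.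
  under eq_bigr => l _ do rewrite lin3.
  rewrite lin3 Re_sum; congr (0 <= _ - _ * _ + _); apply: eq_bigr => l _; by rewrite Re_sum.
have HI : complex.Im (\sum_(l < n) \sum_(w : l.-tuple 'I_m) x l w * y l w) ^+ 2 <= A * B.
  apply: discr_CS => // t.
  have : 0 <= \sum_(l < n) \sum_(w : l.-tuple 'I_m) (q l)^-1 *
      ((t * complex.Re (x l w) - q l * complex.Im (y l w)) ^+ 2 +
       (t * complex.Im (x l w) - q l * complex.Re (y l w)) ^+ 2).
    rewrite sumr_ge0 // => l _; rewrite sumr_ge0 // => w _.
    by rewrite mulr_ge0 ?addr_ge0 ?sqr_ge0 // invr_ge0 ltW.
  have E : forall (l : 'I_n) (w : l.-tuple 'I_m), (q l)^-1 *
      ((t * complex.Re (x l w) - q l * complex.Im (y l w)) ^+ 2 +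
       (t * complex.Im (x l w) - q l * complex.Re (y l w)) ^+ 2) =
      t ^+ 2 * ((q l)^-1 * cnorm2 (x l w)) - 2 * t * complex.Im (x l w * y l w) + q l * cnorm2 (y l w).
    move=> l w; have ql := q0 l; case: (x l w) => a b; case: (y l w) => c d; rewrite /cnorm2 /=.
    by field; rewrite gt_eqF.
  under eq_bigr => l _ do under eq_bigr => w _ do rewrite E.
  under eq_bigr => l _ do rewrite lin3.
  rewrite lin3 Im_sum; congr (0 <= _ - _ * _ + _); apply: eq_bigr => l _; by rewrite Im_sum.
rewrite /cnorm2; lra.
Qed.
Lemma psum_entry N (X : mxt N) (c : seq 'I_m -> C) n i j :
  psum c X n i j = \sum_(l < n) \sum_(w : l.-tuple 'I_m) c (tval w) * mono X (tval w) i j.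
Proof.
rewrite /psum summxE; apply: eq_bigr => l _; rewrite /hompart summxE; apply: eq_bigr => w _.
by rewrite mxE.
Qed.

Lemma cvg_to_B (Om : forall N, set (mxt N)) (om : forall N, {measure set (mesT R m N) -> \bar R})
   (p : R) N (X : mxt N) : 0 < p -> cvg_set Om p X -> Bset Om om p X.
Proof.
move=> p0 [HX Hc]; split => //.
pose a := fun (i j : 'I_N) (w : seq 'I_m) => mono X w i j.
pose T := fun i j l => \sum_(w : l.-tuple 'I_m) p ^+ l * cnorm2 (a i j (tval w)).
have T0 : forall i j l, 0 <= T i j l.
  by move=> i j l; rewrite sumr_ge0 // => w _; rewrite mulr_ge0 ?cnorm2_ge0 // exprn_ge0 // ltW.
have HB : forall ij : 'I_N * 'I_N, exists B, forall n, \sum_(0 <= l < n) T ij.1 ij.2 l <= B.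
  case=> ii jj /=.
  pose c := fun w : seq 'I_m => ((p ^+ size w) / Qd (T ii jj) (size w).+1)%:C * (a ii jj w)^*.
  have Hw : forall l, wnorm_term p c l = T ii jj l / Qd (T ii jj) l.+1 ^+ 2.
    move=> l; rewrite /wnorm_term /T mulr_suml; apply: eq_bigr => w _.
    rewrite /c size_tuple cnorm2M cnorm2_real cnorm2_conj.
    have q1 := Qd_ge1 l.+1 (T0 ii jj).
    have pl : p ^+ l != 0 by rewrite gt_eqF // exprn_gt0.
    by field; rewrite pl /= gt_eqF //; lra.
  have l2 : l2w p c.
    apply: nondecreasing_is_cvgn.
      by move=> x y xy; apply: sum_nat_mono' => // l; rewrite Hw divr_ge0 ?T0 ?exprn_ge0 //; have := Qd_ge1 l.+1 (T0 ii jj); lra.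
    exists 1 => _ [n _ <-]; rewrite /series /=.
    under eq_bigr do rewrite Hw; exact: abel_dini1.
  have [L HL] := Hc c l2; have [HRe _] := HL ii jj.
  apply: (@abel_dini2 _ _ (complex.Re (L ii jj))) => //.
  suff <- : (fun n => complex.Re (psum c X n ii jj)) = (fun n => \sum_(0 <= l < n) T ii jj l / Qd (T ii jj) l.+1) by [].
  apply: funext => n; rewrite psum_entry big_mkord Re_sum; apply: eq_bigr => l _.
  rewrite Re_sum /T mulr_suml; apply: eq_bigr => w _.
  rewrite /c size_tuple -mulrA conjM_cnorm2 -rmorphM /=; ring.
have [Bf HBf] := boolp.choice HB.
exists (2 * \sum_i \sum_j Bf (i, j)) => f c _ TT M HM.
have M0 : 0 <= M by apply: le_trans (HM 0%N); rewrite /series /= big_geq.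
rewrite /frob2 mulr_sumr mulr_suml; apply: ler_sum => i _; rewrite mulr_sumr mulr_suml; apply: ler_sum => j _.
have [HR HI] := TT N X HX i j.
have bnd : forall n, cnorm2 (psum c X n i j) <= 2 * Bf (i, j) * M.
  move=> n; rewrite psum_entry.
  apply: (le_trans (cs_nested (fun (l : 'I_n) (w : l.-tuple 'I_m) => c (tval w))
      (fun (l : 'I_n) (w : l.-tuple 'I_m) => a i j (tval w)) (fun l => exprn_gt0 l p0))).
  rewrite -mulrA ler_pM2l // mulrC.
  apply: ler_pM.
  - by rewrite sumr_ge0 // => l _; exact: T0.
  - by rewrite sumr_ge0 // => l _; rewrite sumr_ge0 // => w _; rewrite mulr_ge0 ?cnorm2_ge0 // invr_ge0 exprn_ge0 // ltW.
  - by have := HBf (i, j) n; rewrite big_mkord.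
  - by have := HM n; rewrite /series /= big_mkord.
have Hc2 : (fun n => cnorm2 (psum c X n i j)) @ \oo --> cnorm2 (f N X i j).
  rewrite /cnorm2; apply: cvgD; rewrite expr2; under eq_fun do rewrite expr2; exact: cvgM.
have Hn : \forall n \near \oo, cnorm2 (psum c X n i j) <= 2 * Bf (i, j) * M.
  by exists 0%N => // n _; exact: bnd.
have := limr_le (cvgP _ Hc2) Hn.
by rewrite (cvg_lim _ Hc2) //; apply; exact: _.
Qed.
End S.

Unset Implicit Arguments.

Theorem proposition3p8 (R : realType) (m : nat)
    (mu nu : forall N : nat, {measure set (mesT R m N) -> \bar R}) :
  is_torus_haar mu -> is_sphere_inv nu ->
  (forall (N : nat) (X : mxt R m N),
     Bset (@ncpolydisc R m) mu 1 X <-> cvg_set (@ncpolydisc R m) 1 X) /\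
  (forall (N : nat) (X : mxt R m N),
     Bset (@ncball R m) nu m%:R X <-> cvg_set (@ncball R m) m%:R X).
Proof.
move=> Hmu Hnu; split.
  move=> N X; split.
    by apply: B_to_cvg => //; [exact: polydisc_BND | move=> k; case: (Hmu k)].
  exact: cvg_to_B.
case: m mu nu Hmu Hnu => [|m'] mu nu Hmu Hnu.
  exfalso; have [_ [H _]] := Hnu 1%N.
  have E : @sphere R 0 1 = set0.
    apply/seteqP; split => // X; rewrite /sphere /= big_ord0 => /matrixP /(_ 0 0).
    by rewrite !mxE /= => /eqP; rewrite eq_sym oner_eq0.
  by move: H; rewrite E measure0 => -[] /esym/eqP; rewrite oner_eq0.
move=> N X; split.
  by apply: B_to_cvg => //; [exact: ball_BND | move=> k; case: (Hnu k)].
exact: cvg_to_B.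
Qed.
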